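(* Let $A$ be a semilocal ring, $Z$ a finite $A$-scheme, $Y \subset Z$ a closed subscheme, and $d > 0$. Suppose given a closed immersion $\iota_Y\colon Y \hookrightarrow \mathbb{A}^d_A$ over $A$ and, for every maximal ideal $\mathfrak{m} \subset A$, a closed immersion $\iota_\mathfrak{m}\colon Z_{k_\mathfrak{m}} \hookrightarrow \mathbb{A}^d_{k_\mathfrak{m}}$ over $k_\mathfrak{m}$, such that these are compatible (i.e. $\iota_\mathfrak{m}$ and $\iota_Y$ agree on $Y_{k_\mathfrak{m}}$). Then there is a closed immersion $\iota\colon Z \hookrightarrow \mathbb{A}^d_A$ over $A$ that restricts to $\iota_Y$ on $Y$ and to $\iota_\mathfrak{m}$ on $Z_{k_\mathfrak{m}}$ for every maximal ideal $\mathfrak{m}$.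
   Context: $k_\mathfrak{m}$ denotes the residue field of $A$ at $\mathfrak{m}$. *)

(* Defs.v *)
From HB Require Import structures.
From mathcomp Require Import all_boot all_algebra.
Set Implicit Arguments. Unset Strict Implicit. Unset Printing Implicit Defensive.
Import GRing.Theory.
Local Open Scope ring_scope.

Definition is_ideal (R : comPzRingType) (I : R -> Prop) : Prop :=
  [/\ I 0, (forall x y, I x -> I y -> I (x + y)) & (forall r x, I x -> I (r * x))].

Definition is_maximal_ideal (R : comPzRingType) (m : R -> Prop) : Prop :=
  [/\ is_ideal m, ~ m 1 &
      forall J : R -> Prop, is_ideal J -> (forall x, m x -> J x) ->
        (forall x, J x <-> m x) \/ (forall x, J x)].

Definition semilocal (R : comPzRingType) : Prop :=
  exists (n : nat) (ms : 'I_n -> (R -> Prop)), forall m, is_maximal_ideal m ->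
    exists i, forall x, m x <-> ms i x.

Section Alg.
Variables (A B : comPzRingType) (f : {rmorphism A -> B}).

Definition finite_algebra : Prop :=
  exists (n : nat) (v : 'I_n -> B), forall b : B,
    exists c : 'I_n -> A, b = \sum_(i < n) f (c i) * v i.

Inductive gen_alg (d : nat) (x : 'I_d -> B) : B -> Prop :=
  | gen_scal a : gen_alg x (f a)
  | gen_var i : gen_alg x (x i)
  | gen_add u v : gen_alg x u -> gen_alg x v -> gen_alg x (u + v)
  | gen_mul u v : gen_alg x u -> gen_alg x v -> gen_alg x (u * v).

Inductive ext_ideal (m : A -> Prop) : B -> Prop :=
  | ext0 : ext_ideal m 0
  | ext_gen a b : m a -> ext_ideal m (f a * b)
  | ext_add u v : ext_ideal m u -> ext_ideal m v -> ext_ideal m (u + v).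

Definition ideal_sum (I J : B -> Prop) (v : B) : Prop :=
  exists i j, [/\ I i, J j & v = i + j].

(* x_1..x_d generate B modulo the ideal I: i.e. X_i |-> x_i mod I defines  *)
(* a surjection A[X_1..X_d] ->> B/I, a closed immersion Spec(B/I) -> A^d_A. *)
Definition generates_mod (I : B -> Prop) (d : nat) (x : 'I_d -> B) : Prop :=
  forall b, exists u, gen_alg x u /\ I (b - u).

End Alg.

(* Main.v *)
Require Import Defs.
From HB Require Import structures.
From mathcomp Require Import all_boot all_algebra.
From mathcomp Require Import boolp classical_sets.
From mathcomp Require Import ring.
Set Implicit Arguments. Unset Strict Implicit. Unset Printing Implicit Defensive.
Import GRing.Theory.
Local Open Scope ring_scope.

Section Ideals.
Variable (A : comPzRingType).

Lemma ideal_opp (I : A -> Prop) x : is_ideal I -> I x -> I (- x).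
Proof. case=> _ _ hm Ix; rewrite -mulN1r; exact: hm. Qed.

Lemma ideal_sub (I : A -> Prop) x y : is_ideal I -> I x -> I y -> I (x - y).
Proof. move=> hI Ix Iy; case: (hI) => _ ha _; apply: ha => //; exact: ideal_opp. Qed.

Lemma ideal_all (I : A -> Prop) x : is_ideal I -> I 1 -> I x.
Proof. case=> _ _ hm I1; rewrite -(mulr1 x); exact: hm. Qed.

Lemma exists_maximal (I : A -> Prop) : is_ideal I -> ~ I 1 ->
  exists m, is_maximal_ideal m /\ forall a, I a -> m a.
Proof.
move=> hI nI1.
pose P := fun K : set A => K = set0 \/ [/\ is_ideal K, (forall a, I a -> K a) & ~ K 1].
have [|K [PK Kmax]] := @Zorn_bigcup A P.
  move=> F FP Ftot.
  have [Fne|Fe] := pselect (exists K, F K); last first.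
    left; apply/seteqP; split => x //= [K FK _]; apply: Fe; by exists K.
  case: Fne => K0 FK0.
  have Fid : forall K, F K -> K <> set0 -> [/\ is_ideal K, (forall a, I a -> K a) & ~ K 1].
    by move=> K /FP [->//|h] _.
  have [allE|someNE] := pselect (forall K, F K -> K = set0).
    left; apply/seteqP; split => x //= [K FK Kx]; by rewrite (allE K FK) in Kx.
  move: someNE => /existsNP [K1 /not_implyP [FK1 K1ne]].
  right; have [hK1 IK1 nK1] := Fid K1 FK1 K1ne.
  have getK : forall x y, (\bigcup_(X in F) X)%classic x -> (\bigcup_(X in F) X)%classic y ->
     exists K, [/\ F K, K <> set0, K x & K y].
    move=> x y [Kx FKx Kxx] [Ky FKy Kyy].
    have [sub|sub] := Ftot _ _ FKx FKy.
      exists Ky; split => //; last exact: sub.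
      by move=> E; rewrite E in Kyy.
    exists Kx; split => //; last exact: sub.
    by move=> E; rewrite E in Kxx.
  split.
  - split.
    + exists K1 => //; by case: hK1.
    + move=> x y hx hy; have [K [FK Kne Kx Ky]] := getK _ _ hx hy.
      have [[_ ha _] _ _] := Fid K FK Kne; exists K => //; exact: ha.
    + move=> r x [K FK Kx]; have [[_ _ hm] _ _] := Fid K FK (fun E => ltac:(by rewrite E in Kx)).
      exists K => //; exact: hm.
  - by move=> a Ia; exists K1 => //; exact: IK1.
  - move=> [K FK K1']; have [_ _ nK] := Fid K FK (fun E => ltac:(by rewrite E in K1')); exact: nK.
case: PK => [K0|[hK IK nK1]].
  exfalso; apply: (Kmax I); last by right; split.
  rewrite K0; split => //; move=> /(_ 0); case: hI => I0 _ _ /(_ I0) //.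
exists K; split => //; split => // L hL KL.
have [L1|nL1] := pselect (L 1); first by right => x; exact: ideal_all.
left => x; split => [Lx|]; last exact: KL.
apply: contrapT => nKx; apply: (Kmax L); last by right; split => // a /IK /KL.
split; first by move=> y /KL.
move=> /(_ x Lx); exact: nKx.
Qed.

Lemma comaximal (p m : A -> Prop) : is_maximal_ideal p -> is_maximal_ideal m ->
  p <> m -> exists q, p q /\ m (1 - q).
Proof.
move=> [hp np1 pmax] [hm nm1 mmax] pm.
pose K x := exists a b, [/\ m a, p b & x = a + b].
have hK : is_ideal K.
  case: hp => p0 pa pM; case: hm => m0 ma mM.
  split.
  - by exists 0, 0; rewrite addr0.
  - move=> x y [a [b [ma' pb ->]]] [a' [b' [ma'' pb' ->]]].
    exists (a + a'), (b + b'); split; [exact: ma|exact: pa|ring].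
  - move=> r x [a [b [ma' pb ->]]]; exists (r * a), (r * b); split; [exact: mM|exact: pM|ring].
have mK : forall x, m x -> K x.
  move=> x mx; exists x, 0; split => //; [by case: hp|by rewrite addr0].
case: (mmax K hK mK) => [Km|Kall].
  exfalso; have pm' : forall x, p x -> m x.
    move=> x px; apply/Km; exists 0, x; split => //; [by case: hm|by rewrite add0r].
  case: (pmax m hm pm') => [e|mall]; last exact: nm1.
  by apply: pm; apply: funext => x; apply: propext; split => /e.
have [a [b [ma pb e]]] := Kall 1.
exists b; split => //; by rewrite e addrK.
Qed.

End Ideals.

Section Ext.
Variables (A B : comPzRingType) (f : {rmorphism A -> B}).

Lemma ext_mul (m : A -> Prop) r u : ext_ideal f m u -> ext_ideal f m (r * u).
Proof.
elim=> [|a b ma|u1 u2 _ h1 _ h2].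
- rewrite mulr0; exact: ext0.
- by rewrite mulrCA; apply: ext_gen.
- rewrite mulrDr; exact: ext_add.
Qed.

Lemma ext_opp (m : A -> Prop) u : ext_ideal f m u -> ext_ideal f m (- u).
Proof. move=> h; rewrite -mulN1r; exact: ext_mul. Qed.

Lemma ext_sub (m : A -> Prop) u v : ext_ideal f m u -> ext_ideal f m v -> ext_ideal f m (u - v).
Proof. move=> hu hv; apply: ext_add => //; exact: ext_opp. Qed.

Lemma ext_eq (m : A -> Prop) u v : ext_ideal f m u -> u = v -> ext_ideal f m v.
Proof. by move=> h <-. Qed.

Lemma gen_transfer (m : A -> Prop) d (x z : 'I_d -> B) :
  (forall i, ext_ideal f m (x i - z i)) ->
  forall u, gen_alg f z u -> exists u', gen_alg f x u' /\ ext_ideal f m (u - u').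
Proof.
move=> hxz u; elim=> [a|i|u1 u2 _ [v1 [g1 e1]] _ [v2 [g2 e2]]|u1 u2 _ [v1 [g1 e1]] _ [v2 [g2 e2]]].
- exists (f a); split; first exact: gen_scal. rewrite subrr; exact: ext0.
- exists (x i); split; first exact: gen_var.
  apply: (ext_eq (ext_opp (hxz i))). ring.
- exists (v1 + v2); split; first exact: gen_add.
  apply: (ext_eq (ext_add e1 e2)). ring.
- exists (v1 * v2); split; first exact: gen_mul.
  apply: (ext_eq (ext_add (ext_mul u2 e1) (ext_mul v1 e2))). ring.
Qed.

End Ext.

Section CRT.
Variables (A B : comPzRingType) (f : {rmorphism A -> B}).
Variables (n : nat) (ms : 'I_n -> (A -> Prop)).

Lemma ord_lt_S k (i : 'I_n) : (i < k.+1)%N -> (i < k)%N \/ (nat_of_ord i = k).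
Proof. rewrite ltnS leq_eqVlt => /orP [/eqP->|->]; by [right|left]. Qed.

Lemma crt_elem k : forall m, is_maximal_ideal m ->
  (forall i : 'I_n, (i < k)%N -> is_maximal_ideal (ms i) -> ms i <> m) ->
  exists e, m (1 - e) /\ forall i : 'I_n, (i < k)%N -> is_maximal_ideal (ms i) -> ms i e.
Proof.
elim: k => [m hm _|k IH m hm hne].
  exists 1; split => //; rewrite subrr; by case: hm => -[].
have [e [me he]] : exists e, m (1 - e) /\ forall i : 'I_n, (i < k)%N -> is_maximal_ideal (ms i) -> ms i e.
  apply: IH => // i ik; apply: hne; exact: ltnW.
have [H|H] := pselect (exists ko : 'I_n, nat_of_ord ko = k /\ is_maximal_ideal (ms ko)).
  case: H => ko [kok hko].
  have [q [mq m1q]] := comaximal hko hm (hne ko ltac:(by rewrite kok) hko).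
  exists (e * q); split.
    have -> : 1 - e * q = (1 - e) + e * (1 - q) by ring.
    case: (hm) => -[_ ma mM] _ _; apply: ma => //; exact: mM.
  move=> i /ord_lt_S [ik|ik] hi.
    rewrite mulrC; case: (hi) => -[_ _ mM] _ _; apply: mM; exact: he.
  have -> : i = ko by apply: val_inj; rewrite /= ik kok.
  case: hko => -[_ _ mM] _ _; apply: mM; done.
exists e; split => // i /ord_lt_S [ik|ik] hi; first exact: he.
exfalso; apply: H; by exists i.
Qed.

Variable J : B -> Prop.
Hypothesis hJ : is_ideal J.

Lemma crt k : forall t : (A -> Prop) -> B, (forall m, J (t m)) ->
  exists j, J j /\ forall i : 'I_n, (i < k)%N -> is_maximal_ideal (ms i) ->
     ext_ideal f (ms i) (j - t (ms i)).
Proof.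
move=> t ht; elim: k => [|k [j [Jj hj]]].
  exists 0; split; [by case: hJ|by []].
have [H|H] := pselect (exists ko : 'I_n, [/\ nat_of_ord ko = k, is_maximal_ideal (ms ko) &
   forall i : 'I_n, (i < k)%N -> is_maximal_ideal (ms i) -> ms i <> ms ko]).
  case: H => ko [kok hko hne].
  have [e [me he]] := crt_elem hko hne.
  exists (j + f e * (t (ms ko) - j)); split.
    case: hJ => _ ha hm; apply: (ha) => //; apply: hm; apply: (ha); first exact: ht.
    exact: ideal_opp.
  move=> i /ord_lt_S [ik|ik] hi.
    apply: (ext_eq (ext_add (hj i ik hi) (ext_gen f (t (ms ko) - j) (he i ik hi)))); ring.
  have -> : i = ko by apply: val_inj; rewrite /= ik kok.
  apply: (ext_eq (ext_gen f (j - t (ms ko)) me)); rewrite rmorphB rmorph1; ring.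
exists j; split => // i /ord_lt_S [ik|ik] hi; first exact: hj.
apply: contrapT => nh; apply: H; exists i; split => // i' i'k hi' e.
apply: nh; rewrite -e; apply: hj => //; by rewrite -ik.
Qed.

End CRT.
Section Span.
Variables (A B : comPzRingType) (f : {rmorphism A -> B}).
Variables (n : nat) (v : 'I_n -> B).

Definition span (k : nat) (s : B) := exists c : 'I_n -> A,
  (forall i : 'I_n, (k <= i)%N -> c i = 0) /\ s = \sum_(i < n) f (c i) * v i.

Lemma span0 k : span k 0.
Proof.
exists (fun _ => 0); split => //; rewrite big1 // => i _; by rewrite rmorph0 mul0r.
Qed.

Lemma spanD k s1 s2 : span k s1 -> span k s2 -> span k (s1 + s2).
Proof.
move=> [c1 [h1 ->]] [c2 [h2 ->]]; exists (fun i => c1 i + c2 i); split.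
  by move=> i ki; rewrite h1 // h2 // addr0.
rewrite -big_split; apply: eq_bigr => i _; by rewrite rmorphD mulrDl.
Qed.

Lemma spanM k a s : span k s -> span k (f a * s).
Proof.
move=> [c [h ->]]; exists (fun i => a * c i); split.
  by move=> i ki; rewrite h // mulr0.
rewrite mulr_sumr; apply: eq_bigr => i _; by rewrite rmorphM mulrA.
Qed.

Lemma span_le k k' s : (k <= k')%N -> span k s -> span k' s.
Proof.
move=> kk [c [h ->]]; exists c; split => // i ki; apply: h; exact: leq_trans ki.
Qed.

Lemma span_split k (hk : (k < n)%N) s : span k.+1 s ->
  exists s' a, span k s' /\ s = s' + f a * v (Ordinal hk).
Proof.
move=> [c [h ->]]; set ko := Ordinal hk.
pose c' i := if i == ko then 0 else c i.
exists (\sum_(i < n) f (c' i) * v i), (c ko); split.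
  exists c'; split => // i ki; rewrite /c'; case: eqP => // ne.
  apply: h; rewrite ltn_neqAle ki andbT; apply/eqP => e; apply: ne.
  by apply: val_inj; rewrite /= -e.
rewrite (bigD1 ko) //= [in RHS](bigD1 ko) //= /c' eqxx rmorph0 mul0r add0r addrC.
congr (_ + _); apply: eq_bigr => i /negbTE ->; done.
Qed.

Variable C : B -> Prop.
Hypotheses (hCf : forall a, C (f a)) (hCadd : forall u w, C u -> C w -> C (u + w))
  (hCmul : forall u w, C u -> C w -> C (u * w)).

Definition CS k b := exists u s, [/\ C u, span k s & b = u + s].

Lemma CSC k u : C u -> CS k u.
Proof. move=> Cu; exists u, 0; split => //; [exact: span0|by rewrite addr0]. Qed.

Lemma CSspan k s : span k s -> CS k s.
Proof. move=> hs; exists (f 0), s; split => //; by rewrite rmorph0 add0r. Qed.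

Lemma CSD k b1 b2 : CS k b1 -> CS k b2 -> CS k (b1 + b2).
Proof.
move=> [u1 [s1 [C1 S1 ->]]] [u2 [s2 [C2 S2 ->]]].
exists (u1 + u2), (s1 + s2); split; [exact: hCadd|exact: spanD|ring].
Qed.

Lemma CSM k a b : CS k b -> CS k (f a * b).
Proof.
move=> [u [s [Cu Ss ->]]]; exists (f a * u), (f a * s); split.
- exact: hCmul.
- exact: spanM.
- by rewrite mulrDr.
Qed.

Hypothesis hv : forall b, exists c : 'I_n -> A, b = \sum_(i < n) f (c i) * v i.
Hypothesis exmax : forall I : A -> Prop, is_ideal I -> ~ I 1 ->
  exists m, is_maximal_ideal m /\ forall a, I a -> m a.
Hypothesis hloc : forall m, is_maximal_ideal m -> forall b,
  exists u, C u /\ ext_ideal f m (b - u).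

Lemma CS_step k (hk : (k < n)%N) : (forall b, CS k.+1 b) -> forall b, CS k b.
Proof.
move=> hS; set ko := Ordinal hk.
pose I a := CS k (f a * v ko).
have hI : is_ideal I.
  split.
  - rewrite /I rmorph0 mul0r; exact/CSspan/span0.
  - move=> a1 a2 h1 h2; rewrite /I rmorphD mulrDl; exact: CSD.
  - move=> r a h; rewrite /I rmorphM -mulrA; exact: CSM.
have I1 : I 1.
  apply: contrapT => nI1.
  have [m [hm Im]] := exmax hI nI1.
  have [[m0 madd mmul] nm1 _] := hm.
  have key : forall w, ext_ideal f m w -> exists a, m a /\ CS k (w - f a * v ko).
    move=> w0; elim => [|a b ma|u w _ [a1 [ma1 h1]] _ [a2 [ma2 h2]]].
    - exists 0; split => //; rewrite rmorph0 mul0r subr0; exact/CSspan/span0.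
    - have [u [s [Cu Ss ->]]] := hS b; have [s' [a' [Ss' ->]]] := span_split hk Ss.
      exists (a * a'); split; first by rewrite mulrC; apply: mmul.
      have -> : f a * (u + (s' + f a' * v ko)) - f (a * a') * v ko = f a * u + f a * s'.
        by rewrite rmorphM; ring.
      apply: CSD; [apply: CSC; exact: hCmul| apply: CSspan; exact: spanM].
    - exists (a1 + a2); split; first exact: madd.
      have -> : u + w - f (a1+a2) * v ko = (u - f a1 * v ko) + (w - f a2 * v ko).
        by rewrite rmorphD; ring.
      exact: CSD.
  have [u [Cu e]] := hloc hm (v ko).
  have [a [ma h]] := key _ e.
  have : I (1 - a).
    rewrite /I.
    have -> : f (1 - a) * v ko = u + (v ko - u - f a * v ko) by rewrite rmorphB rmorph1; ring.
    apply: CSD => //; exact: CSC.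
  move/Im => m1a; apply: nm1; have := madd _ _ m1a ma; by rewrite subrK.
move=> b; have [u [s [Cu Ss ->]]] := hS b; have [s' [a [Ss' ->]]] := span_split hk Ss.
have := CSM a I1; rewrite /I rmorph1 mul1r => h.
rewrite addrA; apply: CSD => //; apply: CSD; [exact: CSC|exact: CSspan].
Qed.

Lemma nakayama_all b : C b.
Proof.
have S : forall j, (j <= n)%N -> forall b, CS (n - j) b.
  elim=> [_ b'|j IH jn b'].
    have [c ->] := hv b'; apply: CSspan; exists c; split => // i; rewrite subn0 => ni.
    by have := ltn_ord i; rewrite ltnNge ni.
  have hk : (n - j.+1 < n)%N by rewrite subnSK // leq_subr.
  apply: (CS_step hk); rewrite -subSn // subSS; apply: IH; exact: ltnW.
have [u [s [Cu [c [hc ->]] ->]]] := S n (leqnn n) b.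
rewrite big1 ?addr0 // => i _; by rewrite hc ?subnn // rmorph0 mul0r.
Qed.

End Span.

Lemma choiceP X Y (P : X -> Y -> Prop) :
  (forall x, exists y, P x y) -> exists g, forall x, P x (g x).
Proof. by move=> h; have [g hg] := choice h; exists g. Qed.

Theorem proposition3p1
  (A B : comPzRingType) (f : {rmorphism A -> B})
  (hA : semilocal A) (hB : finite_algebra f)
  (J : B -> Prop) (hJ : is_ideal J)
  (d : nat) (hd : (0 < d)%N)
  (y : 'I_d -> B) (hy : generates_mod f J y)
  (z : (A -> Prop) -> 'I_d -> B)
  (hz : forall m, is_maximal_ideal m -> generates_mod f (ext_ideal f m) (z m))
  (hcompat : forall m, is_maximal_ideal m -> forall i,
       ideal_sum J (ext_ideal f m) (z m i - y i)) :
  exists x : 'I_d -> B,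
    [/\ (forall b, gen_alg f x b),
        (forall i, J (x i - y i)) &
        (forall m, is_maximal_ideal m -> forall i, ext_ideal f m (x i - z m i))].
Proof.
move: hA => [n [ms hms]].
have T : forall i : 'I_d, exists t : (A -> Prop) -> B, forall m,
    J (t m) /\ (is_maximal_ideal m -> ext_ideal f m (z m i - y i - t m)).
  move=> i; apply: (@choiceP (A -> Prop) B (fun (m : A -> Prop) (t : B) => J t /\ (is_maximal_ideal m -> ext_ideal f m (z m i - y i - t)))) => m.
  have [hm|nm] := pselect (is_maximal_ideal m).
    have [a [b [Ja eb e]]] := hcompat m hm i.
    exists a; split => // _; rewrite e; apply: (ext_eq eb); ring.
  exists 0; split; [by case: hJ | by []].
have [T' hT'] := choiceP T.
have Jx : forall i : 'I_d, exists j, J j /\ forall k : 'I_n,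
    is_maximal_ideal (ms k) -> ext_ideal f (ms k) (j - T' i (ms k)).
  move=> i; have [j [Jj hj]] := crt f ms hJ n (fun m => proj1 (hT' i m)).
  exists j; split => // k; apply: hj; exact: ltn_ord.
have [jj hjj] := choiceP Jx.
exists (fun i => y i + jj i).
have hxz : forall m, is_maximal_ideal m -> forall i, ext_ideal f m (y i + jj i - z m i).
  move=> m hm i; have [k hk] := hms m hm.
  have e : m = ms k := funext (fun x => propext (hk x)).
  subst m.
  have [_ h2] := hjj i; have e1 := h2 k hm; have [_ h3] := hT' i (ms k); have e2 := h3 hm.
  apply: (ext_eq (ext_sub e1 e2)); ring.
split.
- move: hB => [nv [v hv]].
  apply: (@nakayama_all A B f nv v (gen_alg f (fun i => y i + jj i))).
  + exact: gen_scal.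
  + exact: gen_add.
  + exact: gen_mul.
  + exact: hv.
  + exact: exists_maximal.
  + move=> m hm b; have [u [gu eu]] := hz m hm b.
    have [u' [gu' eu']] := gen_transfer (hxz m hm) gu.
    exists u'; split => //; apply: (ext_eq (ext_add eu eu')); ring.
- move=> i; have -> : y i + jj i - y i = jj i by ring.
  exact: (proj1 (hjj i)).
- exact: hxz.
Qed.
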